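(* Let $\Gamma$ be a finite simple graph and $A_\Gamma$ the right-angled Artin group on $\Gamma$, with standard generating set $S=V(\Gamma)^{\pm1}$. Then for $g\in A_\Gamma\smallsetminus\{e\}$, $\kappa(g)=0$ if and only if $g$ is central in $A_\Gamma$; otherwise $\kappa(g)<0$.
   Context: The right-angled Artin group $A_\Gamma$ has generators the vertices of $\Gamma$ and relations $[u,v]=e$ for each edge $\{u,v\}$ of $\Gamma$. For a group with finite generating set $S$ ($S=S^{-1}$, $e\notin S$), $|x|$ is word length, $\mathrm{Av}(g)=\frac{1}{|S|}\sum_{a\in S}|a^{-1}ga|$, and for $g\neq e$ the curvature is $\kappa(g)=\frac{|g|-\mathrm{Av}(g)}{|g|}$. *)

(* Defs.v *)
From HB Require Import structures.
From Stdlib Require Import Relations.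
From mathcomp Require Import all_boot all_order all_algebra.
From mathcomp Require Import boolp.
Set Implicit Arguments. Unset Strict Implicit. Unset Printing Implicit Defensive.
Import Order.TTheory GRing.Theory Num.Theory.

Local Open Scope ring_scope.

Section RAAG.
Variable T : finType.
Variable adj : rel T.

(* A letter (x, b) is the generator x if b = true and x^-1 if b = false.
   The standard generating set S = V(Gamma)^{+-1} is the finite type T * bool. *)
Definition letter := (T * bool)%type.
Definition word := seq letter.

Definition linv (a : letter) : letter := (a.1, ~~ a.2).
Definition winv (w : word) : word := rev (map linv w).

Inductive raag_step : word -> word -> Prop :=
| step_cancel u v a : raag_step (u ++ [:: a; linv a] ++ v) (u ++ v)
| step_comm u v a b : adj a.1 b.1 ->
    raag_step (u ++ [:: a; b] ++ v) (u ++ [:: b; a] ++ v).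

Definition raag_eq : word -> word -> Prop := clos_refl_sym_trans word raag_step.

Lemma wlen_ex (w : word) : exists n, `[< exists w', raag_eq w w' /\ size w' = n >].
Proof. exists (size w); apply/asboolP; exists w; split => //; exact: rst_refl. Qed.

Definition wlen (w : word) : nat := ex_minn (wlen_ex w).

Definition Av (w : word) : rat :=
  (#|{: letter}|%:R)^-1 * \sum_(a : letter) (wlen ([:: linv a] ++ w ++ [:: a]))%:R.

Definition kappa (w : word) : rat := ((wlen w)%:R - Av w) / (wlen w)%:R.

Definition central (w : word) : Prop := forall w' : word, raag_eq (w ++ w') (w' ++ w).

End RAAG.

(* Main.v *)
Require Import Defs.
From Stdlib Require Import Relations.
From mathcomp Require Import all_boot all_order all_algebra.
From mathcomp Require Import boolp.
From mathcomp Require Import zify.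
Import Order.TTheory GRing.Theory Num.Theory.
Set Implicit Arguments. Unset Strict Implicit. Unset Printing Implicit Defensive.

Section Pf.
Variable T : finType.
Variable adj : rel T.
Hypothesis adj_sym : symmetric adj.
Hypothesis adj_irr : irreflexive adj.

Local Notation letter := (letter T).
Local Notation word := (word T).
Local Notation req := (raag_eq adj).

Lemma linvK (a : letter) : linv (linv a) = a.
Proof. by case: a => x []. Qed.

Lemma linv_neq (a : letter) : linv a != a.
Proof. by case: a => x []; rewrite /linv /= xpair_eqE eqxx. Qed.

Lemma req_refl w : req w w. Proof. exact: rst_refl. Qed.
Lemma req_sym w w' : req w w' -> req w' w. Proof. exact: rst_sym. Qed.
Lemma req_trans w1 w2 w3 : req w1 w2 -> req w2 w3 -> req w1 w3.
Proof. exact: rst_trans. Qed.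
Lemma req_step w w' : raag_step adj w w' -> req w w'.
Proof. exact: rst_step. Qed.

Lemma step_ctx u v w w' : raag_step adj w w' -> raag_step adj (u ++ w ++ v) (u ++ w' ++ v).
Proof.
case=> [u0 v0 a|u0 v0 a b hab].
- have -> : u ++ (u0 ++ [:: a; linv a] ++ v0) ++ v = (u ++ u0) ++ [:: a; linv a] ++ (v0 ++ v)
    by rewrite -!catA.
  have -> : u ++ (u0 ++ v0) ++ v = (u ++ u0) ++ (v0 ++ v) by rewrite -!catA.
  exact: step_cancel.
- have -> : u ++ (u0 ++ [:: a; b] ++ v0) ++ v = (u ++ u0) ++ [:: a; b] ++ (v0 ++ v)
    by rewrite -!catA.
  have -> : u ++ (u0 ++ [:: b; a] ++ v0) ++ v = (u ++ u0) ++ [:: b; a] ++ (v0 ++ v)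
    by rewrite -!catA.
  exact: step_comm.
Qed.

Lemma req_ctx u v w w' : req w w' -> req (u ++ w ++ v) (u ++ w' ++ v).
Proof.
elim=> [x y H|x|x y _ IH|x y z _ IH1 _ IH2].
- exact/req_step/step_ctx.
- exact: req_refl.
- exact: req_sym.
- exact: req_trans IH2.
Qed.

Lemma req_catl u w w' : req w w' -> req (u ++ w) (u ++ w').
Proof. by move=> H; have := req_ctx u [::] H; rewrite !cats0. Qed.
Lemma req_catr v w w' : req w w' -> req (w ++ v) (w' ++ v).
Proof. by move=> H; have := req_ctx [::] v H. Qed.

Definition proj (x y : T) (w : word) : word := [seq c <- w | (c.1 == x) || (c.1 == y)].
Definition lasto (s : word) : option letter := ohead (rev s).
Definition C (r : word) (a : letter) : bool :=
  [forall y, ~~ adj a.1 y ==> (lasto (proj a.1 y r) == Some (linv a))].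
Definition CL (s : word) (c : letter) : bool :=
  [forall y, ~~ adj c.1 y ==> (ohead (proj c.1 y s) == Some (linv c))].
Fixpoint delfirst (x : T) (s : word) : word :=
  if s is c :: s' then (if c.1 == x then s' else c :: delfirst x s') else [::].
Definition dellast x (r : word) := rev (delfirst x (rev r)).
Definition ins (r : word) (a : letter) : word := if C r a then dellast a.1 r else rcons r a.
Definition Rw (w : word) : word := foldl ins [::] w.
Definition eqv (r r' : word) := forall p q, ~~ adj p q -> proj p q r = proj p q r'.

Lemma proj_sym p q w : proj p q w = proj q p w.
Proof. by apply: eq_filter => c; rewrite orbC. Qed.
Lemma proj_rcons p q r a : proj p q (rcons r a) =
  if (a.1 == p) || (a.1 == q) then rcons (proj p q r) a else proj p q r.
Proof. by rewrite /proj filter_rcons. Qed.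
Lemma proj_rev p q r : proj p q (rev r) = rev (proj p q r).
Proof. by rewrite /proj filter_rev. Qed.
Lemma lasto_rcons s a : lasto (rcons s a) = Some a.
Proof. by rewrite /lasto rev_rcons. Qed.
Lemma lastoP s c : lasto s = Some c -> exists t, s = rcons t c.
Proof.
rewrite /lasto; case E: (rev s) => [|d t] //= [<-]; exists (rev t).
by rewrite -rev_cons -E revK.
Qed.

Lemma delfirst_out (P : pred letter) x s : (forall d : letter, d.1 = x -> ~~ P d) ->
  filter P (delfirst x s) = filter P s.
Proof.
move=> H; elim: s => //= d s IH; case: eqP => [Hd|_].
- by rewrite (negbTE (H d Hd)).
- by rewrite /= IH.
Qed.

Lemma delfirst_in (P : pred letter) x s c : (forall d : letter, d.1 = x -> P d) ->
  ohead (filter P s) = Some c -> c.1 = x -> filter P (delfirst x s) = behead (filter P s).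
Proof.
move=> HP; elim: s => //= d s IH; case: eqP => [Hd|Hd].
- by rewrite HP.
- rewrite /=; case Pd: (P d) => /=; last exact: IH.
  by move=> [Edc] Hc; case: Hd; rewrite Edc.
Qed.

Lemma delfirst_split x s c : (forall y, ~~ adj x y -> ohead (proj x y s) = Some c) -> c.1 = x ->
  exists q p, [/\ s = q ++ c :: p, delfirst x s = q ++ p & all (fun d : letter => adj x d.1) q].
Proof.
elim: s => [|[dx db] s IH] H Hc.
- by have := H x; rewrite adj_irr => /(_ isT).
- case: (eqVneq dx x) => Hd.
  + subst dx; have := H x; rewrite adj_irr /proj /= ?eqxx /= => /(_ isT) [Edc].
    by exists [::], s; rewrite /= ?eqxx Edc.
  + case Ha: (adj x dx).
    * have H' : forall y, ~~ adj x y -> ohead (proj x y s) = Some c.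
        move=> y Hy; have := H y Hy; rewrite /proj /= (negbTE Hd) /=.
        case: eqP => [Edy|_] //; by rewrite -Edy Ha in Hy.
      have [q [p [E1 E2 E3]]] := IH H' Hc.
      by exists ((dx, db) :: q), p; rewrite /= (negbTE Hd) E2 Ha E3 -E1.
    * have := H dx; rewrite Ha /proj /= eqxx orbT /= => /(_ isT) [Edc].
      by case/eqP: Hd; rewrite -Hc -Edc.
Qed.

Lemma proj_ins_out p q r a : ~~ ((a.1 == p) || (a.1 == q)) -> proj p q (ins r a) = proj p q r.
Proof.
move=> Hn; rewrite /ins; case: (C r a).
- rewrite /dellast proj_rev /proj delfirst_out -?proj_rev ?revK //.
  by move=> d ->.
- by rewrite proj_rcons (negbTE Hn).
Qed.

Lemma proj_ins_push p q r a : ~~ C r a -> proj p q (ins r a) = proj p q (rcons r a).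
Proof. by rewrite /ins => /negbTE ->. Qed.

Lemma proj_ins_pop_aux y r a : ~~ adj a.1 y -> C r a ->
  proj a.1 y r = rcons (proj a.1 y (ins r a)) (linv a).
Proof.
move=> Hy Ca; have := Ca => /forallP/(_ y); rewrite Hy /= => /eqP Hl.
rewrite /ins Ca /dellast proj_rev.
have E : proj a.1 y (delfirst a.1 (rev r)) = behead (proj a.1 y (rev r)).
  apply: (@delfirst_in _ _ _ (linv a)) => //; last first.
    by rewrite -/(proj a.1 y (rev r)) proj_rev.
  by move=> d ->; rewrite eqxx.
rewrite E proj_rev; have [t Et] := lastoP Hl.
by rewrite Et rev_rcons /= revK.
Qed.

Lemma proj_ins_pop p q r a : ~~ adj p q -> C r a -> (a.1 == p) || (a.1 == q) ->
  proj p q r = rcons (proj p q (ins r a)) (linv a).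
Proof.
move=> Hpq Ca /orP[/eqP E|/eqP E].
- by rewrite -E; apply: proj_ins_pop_aux => //; rewrite E.
- rewrite proj_sym [proj p q _]proj_sym -E; apply: proj_ins_pop_aux => //.
  by rewrite E adj_sym.
Qed.

Lemma C_congr s s' a : (forall y, ~~ adj a.1 y -> proj a.1 y s = proj a.1 y s') -> C s a = C s' a.
Proof.
move=> H; apply: eq_forallb => y; case: (boolP (~~ adj a.1 y)) => Hy //=.
by rewrite H.
Qed.

Lemma ins_pair_congr p q s s' a : ~~ adj p q -> proj p q s = proj p q s' -> C s a = C s' a ->
  proj p q (ins s a) = proj p q (ins s' a).
Proof.
move=> Hpq E HC.
case: (boolP ((a.1 == p) || (a.1 == q))) => Hin; last by rewrite !proj_ins_out.
case: (boolP (C s a)) => Cs.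
- have Cs' : C s' a by rewrite -HC.
  have := proj_ins_pop Hpq Cs Hin; have := proj_ins_pop Hpq Cs' Hin.
  by rewrite -E => -> /rcons_inj [].
- have Cs' : ~~ C s' a by rewrite -HC.
  by rewrite !proj_ins_push // !proj_rcons Hin E.
Qed.

Lemma ins_eqv s s' a : eqv s s' -> eqv (ins s a) (ins s' a).
Proof.
move=> E p q Hpq; apply: ins_pair_congr => //; first exact: E.
by apply: C_congr => y Hy; exact: E.
Qed.


Definition J (r : word) := forall (z : T) (c : letter) m, c.1 = z ->
  ~ (forall y, ~~ adj z y -> exists s t, proj z y r = s ++ c :: linv c :: t /\
        count (fun d : letter => d.1 == z) t = m).

Lemma J_nil : J [::].
Proof.
move=> z c m _ H; have := H z; rewrite adj_irr => /(_ isT) [s [t [E _]]].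
by case: s E.
Qed.

Lemma rcons_split (P s t : word) a c d : rcons P a = s ++ c :: d :: t ->
  (t = [::] /\ P = rcons s c /\ a = d) \/ (exists t', t = rcons t' a /\ P = s ++ c :: d :: t').
Proof.
case/lastP: t => [|t' e] E.
- left; split => //.
  have : rcons P a = rcons (rcons s c) d by rewrite E -!cats1 -catA.
  by move/rcons_inj => [-> ->].
- right; exists t'.
  have : rcons P a = rcons (s ++ c :: d :: t') e by rewrite E rcons_cat.
  by move/rcons_inj => [-> ->].
Qed.

Lemma count_rcons_gen (t : word) e z :
  count (fun d : letter => d.1 == z) (rcons t e) = count (fun d : letter => d.1 == z) t + (e.1 == z).
Proof. by rewrite -cats1 count_cat /= addn0. Qed.

Lemma J_ins r a : J r -> J (ins r a).
Proof.
move=> Jr z c m Hcz H.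
case: (boolP (C r a)) => Ca.
- apply: (Jr z c (if a.1 == z then m.+1 else m) Hcz) => y Hy.
  have [s [t [E Et]]] := H y Hy.
  case: (boolP ((a.1 == z) || (a.1 == y))) => Hin.
  + have := proj_ins_pop Hy Ca Hin; rewrite E => ->.
    exists s, (rcons t (linv a)); split; first by rewrite rcons_cat.
    by rewrite count_rcons_gen Et /=; case: (a.1 == z); rewrite ?addn0 ?addn1.
  + rewrite proj_ins_out // in E; exists s, t; split => //.
    by move: Hin; case: (a.1 == z).
- case: (eqVneq a.1 z) => Exz.
  + case: m H => [|m] H.
    * apply: (negP Ca); apply/forallP => y; apply/implyP => Hy.
      have Hy' : ~~ adj z y by rewrite -Exz.
      have [s [t [E Et]]] := H y Hy'.
      rewrite proj_ins_push // proj_rcons Exz eqxx /= in E.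
      case: (rcons_split E) => [[Et0 [EP Ea]]|[t' [Et' _]]].
      -- by rewrite Exz EP lasto_rcons Ea linvK.
      -- by move: Et; rewrite Et' count_rcons_gen Exz eqxx addn1.
    * apply: (Jr z c m Hcz) => y Hy.
      have [s [t [E Et]]] := H y Hy.
      rewrite proj_ins_push // proj_rcons Exz eqxx /= in E.
      case: (rcons_split E) => [[Et0 _]|[t' [Et' EP]]].
      -- by move: Et; rewrite Et0.
      -- exists s, t'; split => //.
         by move: Et; rewrite Et' count_rcons_gen Exz eqxx addn1 => -[].
  + apply: (Jr z c m Hcz) => y Hy.
    have [s [t [E Et]]] := H y Hy.
    rewrite proj_ins_push // proj_rcons (negbTE Exz) /= in E.
    case: (eqVneq a.1 y) => Eay.
    * rewrite Eay eqxx in E.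
      case: (rcons_split E) => [[_ [_ Ea]]|[t' [Et' EP]]].
      -- by case/eqP: Exz; rewrite Ea /= Hcz.
      -- exists s, t'; split => //.
         by move: Et; rewrite Et' count_rcons_gen (negbTE Exz) addn0.
    * rewrite (negbTE Eay) in E; by exists s, t.
Qed.

Lemma ins_cancel r a : J r -> eqv (ins (ins r a) (linv a)) r.
Proof.
move=> Jr p q Hpq.
case: (boolP ((a.1 == p) || (a.1 == q))) => Hin; last by rewrite !proj_ins_out.
case: (boolP (C r a)) => Ca.
- have nC : ~~ C (ins r a) (linv a).
    apply/negP => /forallP H; apply: (Jr a.1 a 0 erefl) => y Hy.
    have := H y; rewrite /= Hy /= linvK => /eqP Hl.
    have [t Et] := lastoP Hl; exists t, [::]; split => //.
    rewrite (@proj_ins_pop a.1 y r a Hy Ca) ?eqxx // Et.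
    by rewrite -!cats1 -catA.
  rewrite proj_ins_push // proj_rcons /= Hin.
  by rewrite (proj_ins_pop Hpq Ca Hin).
- have C2 : C (ins r a) (linv a).
    apply/forallP => y; apply/implyP => /= Hy.
    by rewrite proj_ins_push // proj_rcons eqxx /= lasto_rcons linvK.
  have := @proj_ins_pop p q _ _ Hpq C2 Hin.
  rewrite proj_ins_push // proj_rcons Hin linvK.
  by move/rcons_inj => [->].
Qed.

Lemma pair_excl x y p q : adj x y -> ~~ adj p q -> (x == p) || (x == q) -> (y == p) || (y == q) -> False.
Proof.
move=> Hxy Hpq /orP[]/eqP Ex /orP[]/eqP Ey; subst.
- by rewrite adj_irr in Hxy.
- by rewrite Hxy in Hpq.
- by rewrite adj_sym Hxy in Hpq.
- by rewrite adj_irr in Hxy.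
Qed.

Lemma C_ins_out r a b : adj a.1 b.1 -> C (ins r b) a = C r a.
Proof.
move=> Hab; apply: C_congr => y Hy; apply: proj_ins_out.
apply/negP => Hb; apply: (pair_excl Hab Hy _ Hb).
by rewrite eqxx.
Qed.

Lemma ins_comm r a b : adj a.1 b.1 -> eqv (ins (ins r a) b) (ins (ins r b) a).
Proof.
move=> Hab p q Hpq.
case: (boolP ((a.1 == p) || (a.1 == q))) => Ha.
- have Hb : ~~ ((b.1 == p) || (b.1 == q)).
    by apply/negP => Hb; apply: (pair_excl Hab Hpq Ha Hb).
  rewrite (proj_ins_out _ Hb); apply: ins_pair_congr => //.
  + by rewrite proj_ins_out.
  + by rewrite C_ins_out.
- rewrite [in RHS](proj_ins_out _ Ha); apply: ins_pair_congr => //.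
  + by rewrite proj_ins_out.
  + by rewrite C_ins_out // adj_sym.
Qed.

Lemma eqv_refl r : eqv r r. Proof. by []. Qed.
Lemma eqv_sym r r' : eqv r r' -> eqv r' r.
Proof. by move=> E p q H; rewrite E. Qed.
Lemma eqv_trans r1 r2 r3 : eqv r1 r2 -> eqv r2 r3 -> eqv r1 r3.
Proof. by move=> E1 E2 p q H; rewrite E1 ?E2. Qed.

Lemma foldl_eqv v : forall r r', eqv r r' -> eqv (foldl ins r v) (foldl ins r' v).
Proof. elim: v => //= a v IH r r' E; apply: IH; exact: ins_eqv. Qed.

Lemma J_foldl v : forall r, J r -> J (foldl ins r v).
Proof. elim: v => //= a v IH r Jr; apply: IH; exact: J_ins. Qed.

Lemma J_R w : J (Rw w).
Proof. exact: J_foldl J_nil. Qed.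

Lemma step_eqv w w' : raag_step adj w w' -> eqv (Rw w) (Rw w').
Proof.
case=> [u v a|u v a b Hab]; rewrite /Rw !foldl_cat /=; apply: foldl_eqv.
  - exact: ins_cancel (@J_R u).
- exact: ins_comm.
Qed.

Lemma req_eqv w w' : req w w' -> eqv (Rw w) (Rw w').
Proof.
elim=> [x y H|x|x y _ IH|x y z _ IH1 _ IH2].
- exact: step_eqv.
- exact: eqv_refl.
- exact: eqv_sym.
- exact: eqv_trans IH2.
Qed.

Lemma size_sum (s : word) : size s = \sum_(x : T) count (fun c : letter => c.1 == x) s.
Proof.
elim: s => [|c s IH] /=; first by rewrite big1.
rewrite IH big_split /=.
have -> : \sum_(i : T) ((c.1 == i) : nat) = 1.
  rewrite (bigD1 c.1) //= eqxx big1 // => y Hy.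
  by rewrite eq_sym (negbTE Hy).
by rewrite add1n.
Qed.

Lemma size_eqv r r' : eqv r r' -> size r = size r'.
Proof.
move=> E; rewrite !size_sum; apply: eq_bigr => x _.
have e : forall s : word, count (fun c : letter => c.1 == x) s = size (proj x x s).
  by move=> s; rewrite size_filter; apply: eq_count => c; rewrite orbb.
by rewrite !e E // adj_irr.
Qed.

Lemma move_left (u q v : word) a : all (fun d : letter => adj a.1 d.1) q ->
  req (u ++ q ++ a :: v) (u ++ a :: q ++ v).
Proof.
elim: q u => [|d q IH] u /=; first by move=> _; exact: req_refl.
case/andP=> Hd Hq.
have e : u ++ d :: q ++ a :: v = rcons u d ++ q ++ a :: v by rewrite cat_rcons.
rewrite e; apply: req_trans (IH _ Hq) _.
rewrite -cats1 -catA /=.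
have := @step_comm T adj u (q ++ v) d a; rewrite adj_sym Hd => /(_ isT) /=.
exact: req_step.
Qed.

Lemma C_split r a : C r a -> exists q p, [/\ r = p ++ linv a :: q, dellast a.1 r = p ++ q &
  all (fun d : letter => adj a.1 d.1) q].
Proof.
move=> Ca.
have H : forall y, ~~ adj a.1 y -> ohead (proj a.1 y (rev r)) = Some (linv a).
  move=> y Hy; have := Ca => /forallP/(_ y); rewrite Hy /= => /eqP.
  by rewrite proj_rev.
have [q [p [E1 E2 E3]]] := delfirst_split H erefl.
exists (rev q), (rev p); split.
- by rewrite -(revK r) E1 rev_cat rev_cons cat_rcons.
- by rewrite /dellast E2 rev_cat.
- by rewrite all_rev.
Qed.

Lemma ins_size r a : (C r a -> (size (ins r a)).+1 = size r) /\
  (~~ C r a -> size (ins r a) = (size r).+1).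
Proof.
split => Ca.
- have [q [p [E1 E2 _]]] := C_split Ca.
  by rewrite /ins Ca E2 E1 !size_cat /= addnS.
- by rewrite /ins (negbTE Ca) size_rcons.
Qed.

Lemma ins_req r a : req (ins r a) (rcons r a).
Proof.
case: (boolP (C r a)) => Ca; last by rewrite /ins (negbTE Ca); exact: req_refl.
have [q [p [E1 E2 E3]]] := C_split Ca.
rewrite /ins Ca E2 E1 rcons_cat /= -cats1.
apply: req_sym.
have e : p ++ linv a :: q ++ [:: a] = rcons p (linv a) ++ q ++ [:: a] by rewrite cat_rcons.
rewrite e; apply: req_trans (move_left (rcons p (linv a)) [::] E3) _.
rewrite cats0 -cats1 -catA /=.
have := @step_cancel T adj p q (linv a); rewrite linvK.
exact: req_step.
Qed.

Lemma R_rcons w a : Rw (rcons w a) = ins (Rw w) a.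
Proof. by rewrite /Rw -cats1 foldl_cat. Qed.

Lemma R_req w : req (Rw w) w.
Proof.
elim/last_ind: w => [|w a IH]; first exact: req_refl.
rewrite R_rcons; apply: req_trans (ins_req _ _) _.
rewrite -!cats1; exact: req_catr.
Qed.

Lemma R_size w : size (Rw w) <= size w.
Proof.
elim/last_ind: w => [|w a IH] //.
rewrite R_rcons size_rcons; have [H1 H2] := ins_size (Rw w) a.
case: (boolP (C (Rw w) a)) => Ca.
- by have := H1 Ca; lia.
- by rewrite H2.
Qed.

Lemma wlen_min w w' : req w w' -> wlen adj w <= size w'.
Proof.
move=> H; rewrite /wlen; case: ex_minnP => m _ Hmin; apply: Hmin.
by apply/asboolP; exists w'.
Qed.

Lemma wlen_wit w : exists w', req w w' /\ size w' = wlen adj w.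
Proof.
by rewrite /wlen; case: ex_minnP => m /asboolP [w' [H1 H2]] _; exists w'.
Qed.

Lemma wlenE w : wlen adj w = size (Rw w).
Proof.
apply/eqP; rewrite eqn_leq; apply/andP; split.
- by apply: wlen_min; apply: req_sym; apply: R_req.
- have [w' [H1 H2]] := wlen_wit w.
  rewrite -H2 (size_eqv (req_eqv H1)); exact: R_size.
Qed.

Lemma wlen_req w w' : req w w' -> wlen adj w = wlen adj w'.
Proof. by move=> H; rewrite !wlenE; apply: size_eqv; apply: req_eqv. Qed.

Lemma geo w : size (Rw w) = size w -> Rw w = w.
Proof.
elim/last_ind: w => [|w a IH] //.
rewrite R_rcons; have := R_size w; have [H1 H2] := ins_size (Rw w) a.
case: (boolP (C (Rw w) a)) => Ca.
- by have := H1 Ca; rewrite size_rcons; lia.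
- rewrite /ins (negbTE Ca) !size_rcons => _ [E].
  by rewrite IH.
Qed.

Lemma winv_cat (u v : word) : winv (u ++ v) = winv v ++ winv u.
Proof. by rewrite /winv map_cat rev_cat. Qed.

Lemma winvK (w : word) : winv (winv w) = w.
Proof.
rewrite /winv map_rev revK -map_comp.
by elim: w => //= c w IH; rewrite linvK IH.
Qed.

Lemma size_winv (w : word) : size (winv w) = size w.
Proof. by rewrite /winv size_rev size_map. Qed.

Lemma step_winv w w' : raag_step adj w w' -> raag_step adj (winv w) (winv w').
Proof.
case=> [u v a|u v a b Hab]; rewrite !winv_cat -catA.
- have -> : winv [:: a; linv a] = [:: a; linv a] by rewrite /winv /= linvK.
  exact: step_cancel.
- have -> : winv [:: a; b] = [:: linv b; linv a] by [].
  have -> : winv [:: b; a] = [:: linv a; linv b] by [].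
  by rewrite -catA; apply: step_comm; rewrite /= adj_sym.
Qed.

Lemma req_winv w w' : req w w' -> req (winv w) (winv w').
Proof.
elim=> [x y H|x|x y _ IH|x y z _ IH1 _ IH2].
- exact/req_step/step_winv.
- exact: req_refl.
- exact: req_sym.
- exact: req_trans IH2.
Qed.

Lemma wlen_winv_le w : wlen adj (winv w) <= wlen adj w.
Proof.
have [w' [H1 H2]] := wlen_wit w.
by rewrite -H2 -size_winv; apply: wlen_min; apply: req_winv.
Qed.

Lemma wlen_winv w : wlen adj (winv w) = wlen adj w.
Proof.
apply/eqP; rewrite eqn_leq wlen_winv_le /=.
by have := wlen_winv_le (winv w); rewrite winvK.
Qed.

Lemma proj_winv p q w : proj p q (winv w) = winv (proj p q w).
Proof. by rewrite /proj /winv filter_rev filter_map. Qed.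

Lemma left_len s c : Rw s = s ->
  (CL s c -> (wlen adj (c :: s)).+1 = size s) /\ (~~ CL s c -> wlen adj (c :: s) = (size s).+1).
Proof.
move=> Hs.
have e1 : wlen adj (c :: s) = wlen adj (rcons (winv s) (linv c)).
  by rewrite -wlen_winv /winv /= rev_cons.
have g : Rw (winv s) = winv s.
  by apply: geo; rewrite -wlenE wlen_winv wlenE Hs size_winv.
have eC : C (winv s) (linv c) = CL s c.
  apply: eq_forallb => y /=; congr (_ ==> _).
  rewrite proj_winv /lasto /winv revK.
  case: (proj c.1 y s) => [|d l] //=.
  rewrite linvK; apply/eqP/eqP => [[E]|[E]]; congr Some; [by rewrite -E linvK | by rewrite E linvK].
rewrite e1 wlenE R_rcons g; have [H1 H2] := ins_size (winv s) (linv c).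
rewrite eC size_winv in H1 H2; split => H.
- exact: H1.
- exact: H2.
Qed.

Definition Hx (r : word) x := forall y, ~~ adj x y -> forall c, ohead (proj x y r) = Some c -> c.1 = x.

Lemma A1_excl r a : C r a -> ~~ C r (linv a).
Proof.
move=> Ca; apply/negP => Cb.
move/forallP/(_ a.1): Ca; rewrite adj_irr /= => /eqP E1.
move/forallP/(_ a.1): Cb; rewrite /= adj_irr /= linvK E1 => /eqP [] E.
by move: (linv_neq a); rewrite E eqxx.
Qed.

Lemma ohead_rcons (l : word) e c : ohead l = Some c -> ohead (rcons l e) = Some c.
Proof. by case: l. Qed.

Lemma A_main r a : C r a -> CL (ins r a) (linv a) -> ~~ CL (ins r (linv a)) (linv (linv a)).
Proof.
move=> Ca CLa; have nCb := A1_excl Ca.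
have Hxx : ~~ adj a.1 a.1 by rewrite adj_irr.
apply/negP => /forallP/(_ a.1); rewrite /= adj_irr /= linvK.
rewrite proj_ins_push // proj_rcons /= eqxx /=.
move/forallP/(_ a.1): CLa; rewrite /= adj_irr /= linvK => /eqP Ha.
rewrite (proj_ins_pop_aux Hxx Ca) (ohead_rcons _ (ohead_rcons _ Ha)) => /eqP [] E.
by move: (linv_neq a); rewrite -E eqxx.
Qed.

Lemma A2_H r a : CL (ins r a) (linv a) -> Hx r a.1.
Proof.
move=> CLa y Hy c Hc.
move/forallP/(_ y): CLa; rewrite /= Hy /= linvK => /eqP Hh.
case: (boolP (C r a)) => Ca.
- rewrite (proj_ins_pop_aux Hy Ca) (ohead_rcons _ Hh) in Hc.
  by case: Hc => <-.
- rewrite proj_ins_push // proj_rcons eqxx /= (ohead_rcons _ Hc) in Hh.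
  by case: Hh => ->.
Qed.

Lemma H_comm r : (forall x, Hx r x) -> forall d c : letter, d \in r -> d.1 = c.1 \/ adj d.1 c.1.
Proof.
move=> HH d c Hd; case: (eqVneq d.1 c.1) => E; [by left | right].
apply/negPn/negP => Hn.
have Hin : d \in proj c.1 d.1 r by rewrite mem_filter eqxx orbT Hd.
case El: (proj c.1 d.1 r) Hin => [|e l] // _.
have Hn' : ~~ adj c.1 d.1 by rewrite adj_sym.
have h1 := HH c.1 d.1 Hn' e; rewrite El in h1.
have h2 := HH d.1 c.1 Hn e; rewrite proj_sym El in h2.
move: (h1 erefl) (h2 erefl) => e1 e2.
by case/eqP: E; rewrite -e2 e1.
Qed.

Lemma letters_comm (c d : letter) : d.1 = c.1 \/ adj d.1 c.1 -> req [:: d; c] [:: c; d].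
Proof.
case=> [E|H].
- case: d c E => [x b1] [y b2] /= ->.
  case: b1; case: b2; try exact: req_refl.
  + apply: (@req_trans _ [::]); [apply: req_step | apply: req_sym; apply: req_step];
      first [exact: (@step_cancel T adj [::] [::] (y, true)) | exact: (@step_cancel T adj [::] [::] (y, false))].
  + apply: (@req_trans _ [::]); [apply: req_step | apply: req_sym; apply: req_step];
      first [exact: (@step_cancel T adj [::] [::] (y, true)) | exact: (@step_cancel T adj [::] [::] (y, false))].
- apply: req_step; exact: (@step_comm T adj [::] [::] d c H).
Qed.

Lemma comm_word (r : word) c : (forall d, d \in r -> d.1 = c.1 \/ adj d.1 c.1) ->
  req (r ++ [:: c]) (c :: r).
Proof.
elim: r => [|d r IH] H /=; first exact: req_refl.
apply: (@req_trans _ (d :: c :: r)).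
  apply: (req_catl [:: d]); apply: IH => e He; apply: H; by rewrite inE He orbT.
have Hl : req [:: d; c] [:: c; d].
  by apply: letters_comm; apply: H; rewrite inE eqxx.
exact: (req_catr r Hl).
Qed.

Lemma central_word (r : word) : (forall d c : letter, d \in r -> d.1 = c.1 \/ adj d.1 c.1) ->
  forall w', req (r ++ w') (w' ++ r).
Proof.
move=> H; elim=> [|c w' IH]; first by rewrite cats0; exact: req_refl.
have -> : r ++ c :: w' = (r ++ [:: c]) ++ w' by rewrite -catA.
apply: (@req_trans _ ((c :: r) ++ w')).
  apply: req_catr; apply: comm_word => d Hd; exact: H.
exact: (req_catl [:: c] IH).
Qed.

Lemma pair_bool (n fa fb sa sb : nat) (A1 A2 B1 B2 : bool) :
  (A1 -> sa.+1 = n) -> (~~ A1 -> sa = n.+1) -> (A2 -> fa.+1 = sa) -> (~~ A2 -> fa = sa.+1) ->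
  (B1 -> sb.+1 = n) -> (~~ B1 -> sb = n.+1) -> (B2 -> fb.+1 = sb) -> (~~ B2 -> fb = sb.+1) ->
  (A1 -> ~~ B1) -> (A1 -> A2 -> ~~ B2) -> (B1 -> B2 -> ~~ A2) ->
  2 * n <= fa + fb /\ (fa + fb = 2 * n -> A2 || B2).
Proof.
case: A1; case: A2; case: B1; case: B2 => /= a1 a2 a3 a4 b1 b2 b3 b4 e m1 m2;
  repeat match goal with
  | H : is_true true -> _ |- _ => specialize (H isT)
  | H : is_true false -> _ |- _ => clear H
  end; try done; split; try lia; move=> ?; try done; lia.
Qed.

Lemma main_sec g : ~ req g [::] ->
  (kappa adj g = 0%R <-> central adj g) /\ (~ central adj g -> (kappa adj g < 0)%R).
Proof.
move=> Hne.
have Rg := R_req g.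
move: Rg; set r := Rw g => Rg.
have hr : Rw r = r.
  by apply: geo; rewrite -wlenE (wlen_req Rg) wlenE.
have hn : wlen adj g = size r by rewrite wlenE.
have npos : 0 < size r.
  rewrite lt0n; apply/negP => /eqP/size0nil E0; apply: Hne.
  by apply: req_sym; rewrite -E0.
pose f a := wlen adj (linv a :: g ++ [:: a]).
have fE : forall a, f a = wlen adj (linv a :: ins r a).
  move=> a; apply: wlen_req.
  have H1 : req (g ++ [:: a]) (ins r a).
    apply: (@req_trans _ (r ++ [:: a])); first exact/req_catr/req_sym.
    by rewrite cats1; apply: req_sym; apply: ins_req.
  exact: (req_catl [:: linv a] H1).
have insg : forall a, Rw (ins r a) = ins r a.
  by move=> a; apply: geo; rewrite -wlenE (wlen_req (ins_req r a)) wlenE R_rcons hr.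
have pair : forall a, 2 * size r <= f a + f (linv a) /\
    (f a + f (linv a) = 2 * size r -> Hx r a.1).
  move=> a.
  have [a1 a2] := ins_size r a; have [a3 a4] := left_len (linv a) (insg a).
  have [b1 b2] := ins_size r (linv a); have [b3 b4] := left_len (linv (linv a)) (insg (linv a)).
  rewrite -fE in a3 a4; rewrite -fE in b3 b4.
  have m2 := @A_main r (linv a); rewrite !linvK in m2.
  have m1 := @A_main r a; rewrite !linvK in m1.
  rewrite !linvK in b3 b4.
  have [P1 P2] := pair_bool a1 a2 a3 a4 b1 b2 b3 b4 (@A1_excl r a) m1 m2.
  split => // /P2 /orP [h|h]; first exact: A2_H.
  by have := @A2_H r (linv a); rewrite linvK => /(_ h).
have sumE : \sum_(a : letter) f a = \sum_(x : T) (f (x, true) + f (x, false)).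
  transitivity (\sum_(p : T * bool) f (p.1, p.2)); first by apply: eq_bigr => -[x b].
  by rewrite -(pair_bigA _ (fun x b => f (x, b))); apply: eq_bigr => x _; rewrite big_bool.
have cardE : #|{: letter}| = (#|T| * 2)%N by rewrite card_prod card_bool.
have Tpos : 0 < #|T|.
  case Er: r npos => [|d r'] // _; apply/card_gt0P; by exists d.1.
have AvE : Av adj g = ((#|{: letter}|%:R)^-1 * (\sum_(a : letter) f a)%:R)%R.
  by rewrite /Av natr_sum.
have kE : kappa adj g = (((size r)%:R - Av adj g) / (size r)%:R)%R by rewrite /kappa hn.
have cen_f : central adj g -> forall a, f a = size r.
  move=> Hc a; rewrite -hn; apply: wlen_req.
  apply: (@req_trans _ (linv a :: a :: g)).
    exact: (req_catl [:: linv a] (Hc [:: a])).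
  apply: req_step; have := @step_cancel T adj [::] g (linv a); rewrite linvK; exact.
case: (boolP [forall x, f (x, true) + f (x, false) == 2 * size r]) => Hall.
- have HH : forall x, Hx r x.
    move=> x; have [_ p2] := pair (x, true); apply: p2.
    by move/forallP/(_ x)/eqP: Hall.
  have Hc : central adj g.
    move=> w'.
    apply: (@req_trans _ (r ++ w')); first exact/req_catr/req_sym.
    apply: (@req_trans _ (w' ++ r)); last exact: req_catl.
    apply: central_word; exact: H_comm.
  have kz : kappa adj g = 0%R.
    have S : \sum_(a : letter) f a = (#|{: letter}| * size r)%N.
      rewrite sumE cardE (eq_bigr (fun _ => 2 * size r)).
        by rewrite sum_nat_const mulnA.
      by move=> x _; apply/eqP; move/forallP/(_ x): Hall.
    rewrite kE AvE S natrM mulKf ?subrr ?mul0r //.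
    by rewrite pnatr_eq0 cardE; lia.
  by split; [split | ].
- move/forallPn: Hall => [x Hx0].
  have Slt : (#|{: letter}| * size r < \sum_(a : letter) f a)%N.
    rewrite sumE cardE (bigD1 x) //=.
    have := pair (x, true) => -[p1 _].
    have Hgt : 2 * size r < f (x, true) + f (x, false) by rewrite ltn_neqAle eq_sym Hx0 p1.
    have Hrest : \sum_(i | i != x) 2 * size r <= \sum_(i | i != x) (f (i, true) + f (i, false)).
      by apply: leq_sum => i _; have [q1 _] := pair (i, true).
    move: Hrest; rewrite sum_nat_const cardC1.
    have : #|T| = (#|T|.-1).+1 by lia.
    move=> ->; rewrite -pred_Sn => Hrest; lia.
  have klt : (kappa adj g < 0)%R.
    rewrite kE ltr_pdivrMr ?ltr0n // mul0r subr_lt0 AvE ltr_pdivlMl.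
      by rewrite -natrM ltr_nat.
    by rewrite ltr0n cardE; lia.
  have ncen : ~ central adj g.
    move=> Hc; move: Hx0; rewrite (cen_f Hc) (cen_f Hc); by rewrite addnn -mul2n eqxx.
  split; last by [].
  split => [kz|Hc]; last by case: ncen.
  by move: klt; rewrite kz ltxx.
Qed.

End Pf.

Local Open Scope ring_scope.

Theorem mainTheorem14 (T : finType) (adj : rel T)
  (adj_sym : symmetric adj) (adj_irr : irreflexive adj) (g : word T) :
  ~ raag_eq adj g [::] ->
  (kappa adj g = 0 <-> central adj g) /\ (~ central adj g -> kappa adj g < 0).
Proof. exact: (main_sec adj_sym adj_irr). Qed.
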